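(* Let $S$ be a linearly dependent set of permutations, each of order larger than one. Then: (a) $S$ is not a singleton; (b) if $|S|=2$, then both permutations in $S$ have order two; (c) if $|S|=3$ and all permutations in $S$ have the same order, then this common order is three.
   Context: A $k$-permutation is a bijection of $[k]=\{1,\dots,k\}$. The gradient polynomial of a $k$-permutation $\pi$ is $P_\pi(\alpha,\beta)=k!\sum_{m\in[k]}\left(\frac{k-m}{1-\alpha}-\frac{m-1}{\alpha}\right)\left(\frac{k-\pi(m)}{1-\beta}-\frac{\pi(m)-1}{\beta}\right)\frac{\alpha^{m-1}(1-\alpha)^{k-m}\beta^{\pi(m)-1}(1-\beta)^{k-\pi(m)}}{(m-1)!(k-m)!(\pi(m)-1)!(k-\pi(m))!}$. A set $S$ of (distinct) permutations is called linearly dependent if the gradient polynomials $P_\pi$, $\pi\in S$, are linearly dependent over $\mathbb{R}$, i.e., there are reals $t_\pi$, not all zero, with $\sum_{\pi\in S}t_\pi P_\pi=0$. *)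

(* Defs.v *)
From HB Require Import structures.
From mathcomp Require Import all_boot all_order all_algebra all_fingroup.
From mathcomp Require Import reals.
Set Implicit Arguments. Unset Strict Implicit. Unset Printing Implicit Defensive.
Import Order.TTheory GRing.Theory Num.Theory.
Local Open Scope ring_scope.

(* The size k is called the "order" of the permutation in the paper.
   Elements of [k] = {1..k} are represented 0-based by 'I_k, so the paper's
   m corresponds to (val m).+1 and pi(m) to (val (pi m)).+1. *)
Definition anyperm := {k : nat & 'S_k}.

(* Gradient polynomial P_pi(alpha, beta), written literally as in the paper
   (with 1-based m := i.+1, pi(m) := (pi i).+1). *)
Definition gradP (R : realType) (k : nat) (pi : 'S_k) (a b : R) : R :=
  (k`!)%:R * \sum_(i < k)
    ( ((k - i.+1)%:R / (1 - a) - (i.+1 - 1)%:R / a)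
    * ((k - (pi i).+1)%:R / (1 - b) - ((pi i).+1 - 1)%:R / b)
    * (a ^+ (i.+1 - 1) * (1 - a) ^+ (k - i.+1)
       * b ^+ ((pi i).+1 - 1) * (1 - b) ^+ (k - (pi i).+1))
    / (((i.+1 - 1)`! * (k - i.+1)`! * ((pi i).+1 - 1)`! * (k - (pi i).+1)`!)%:R) ).

(* A duplicate-free list S of permutations is linearly dependent if there are
   real coefficients t, not all zero on S, with sum t_pi P_pi = 0 as rational
   functions, i.e. at every (alpha, beta) with alpha, beta not in {0, 1}. *)
Definition lin_dep (R : realType) (S : seq anyperm) : Prop :=
  exists t : anyperm -> R,
    (exists2 x, x \in S & t x != 0) /\
    forall a b : R, a != 0 -> a != 1 -> b != 0 -> b != 1 ->
      \sum_(x <- S) t x * gradP (projT2 x) a b = 0.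

(* Main.v *)
Require Import Defs.
From HB Require Import structures.
From mathcomp Require Import all_boot all_order all_algebra all_fingroup.
From mathcomp Require Import reals.
From mathcomp Require Import ring lra zify.
Import Order.TTheory GRing.Theory Num.Theory.
Set Implicit Arguments. Unset Strict Implicit. Unset Printing Implicit Defensive.

Module Helpers.
Local Open Scope ring_scope.

Section Aux.
Variable R : realType.

Definition Gf (k m : nat) (x : R) : R :=
  ((k - m.+1)%:R * x ^+ m - m%:R * x ^+ m.-1) / ((m`! * (k - m.+1)`!)%:R).
Definition wf (k i : nat) : R := ((i`! * (k - i.+2)`!)%:R)^-1.

Lemma fact_neq0 n : (n`!%:R : R) != 0.
Proof. by rewrite pnatr_eq0 -lt0n fact_gt0. Qed.

Lemma factM_neq0 n m : ((n`! * m`!)%:R : R) != 0.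
Proof. by rewrite natrM mulf_neq0 // fact_neq0. Qed.

Lemma L0 (p : {poly R}) :
  (forall x : R, x != 0 -> x != -1 -> p.[x] = 0) -> p = 0.
Proof.
move=> H; apply/eqP; apply: contraT => nz.
set rs := mkseq (fun i => (i.+1)%:R : R) (size p).
have := max_poly_roots nz _ _ (rs := rs).
rewrite size_mkseq ltnn; apply.
- apply/allP => x /mapP [i _ ->]; apply/rootP; apply: H.
    by rewrite pnatr_eq0.
  apply/eqP => h.
  have : (0 : R) < (i.+1)%:R by rewrite ltr0n.
  by rewrite h; lra.
- rewrite map_inj_uniq ?iota_uniq // => i j /eqP.
  by rewrite eqr_nat => /eqP [].
Qed.

Lemma rearr k (c : nat -> R) x :
  \sum_(m < k) c m * Gf k m x = \sum_(i < k.-1) wf k i * (c i - c i.+1) * x ^+ i.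
Proof.
case: k => [|n]; first by rewrite !big_ord0.
rewrite /Gf /=.
have -> : \sum_(m < n.+1) c m * (((n.+1 - m.+1)%:R * x ^+ m - m%:R * x ^+ m.-1) /
    (m`! * (n.+1 - m.+1)`!)%:R)
  = \sum_(m < n.+1) c m * ((n.+1 - m.+1)%:R * x ^+ m / (m`! * (n.+1 - m.+1)`!)%:R)
  - \sum_(m < n.+1) c m * (m%:R * x ^+ m.-1 / (m`! * (n.+1 - m.+1)`!)%:R).
  rewrite -sumrB; apply: eq_bigr => i _; rewrite -mulrBr; congr (_ * _).
  by rewrite mulrBl.
rewrite big_ord_recr /= subnn mul0r mul0r mulr0 addr0.
rewrite big_ord_recl /= mul0r mul0r mulr0 add0r.
rewrite -sumrB; apply: eq_bigr => i _.
rewrite /wf /bump /= add0n add1n.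
have hi := ltn_ord i.
have e1 : (n.+1 - i.+1 = (n - i.+1).+1)%N by lia.
have e2 : (n.+1 - i.+2 = n - i.+1)%N by lia.
rewrite e1 e2 !factS !natrM.
have h1 := fact_neq0 i; have h2 := fact_neq0 (n - i.+1).
have h3 : ((n - i.+1).+1%:R : R) != 0 by rewrite pnatr_eq0.
have h4 : ((i.+1)%:R : R) != 0 by rewrite pnatr_eq0.
set A := ((n - i.+1).+1%:R : R) in h3 *.
set B := ((i.+1)%:R : R) in h4 *.
set C := (i`!%:R : R) in h1 *.
set D := ((n - i.+1)`!%:R : R) in h2 *.

clearbody A B C D. by field; rewrite h1 h2 h3 h4.
Qed.


Lemma L1 k (c : nat -> R) :
  (forall x : R, x != 0 -> x != -1 -> \sum_(m < k) c m * Gf k m x = 0) ->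
  forall i, (i.+1 < k)%N -> c i = c i.+1.
Proof.
move=> H i hi.
set q := \poly_(j < k.-1) (wf k j * (c j - c j.+1)).
have q0 : q = 0.
  by apply: L0 => x h0 h1; rewrite horner_poly -rearr; exact: H.
have := congr1 (fun p : {poly R} => p`_i) q0.
rewrite coef_poly coef0 (_ : (i < k.-1)%N = true); last by apply/idP; lia.
move/eqP; rewrite mulf_eq0 /wf invr_eq0 (negbTE (factM_neq0 _ _)) /= subr_eq0 => /eqP.
done.
Qed.

Lemma Lconst k (c : nat -> R) :
  (forall x : R, x != 0 -> x != -1 -> \sum_(m < k) c m * Gf k m x = 0) ->
  forall i, (i < k)%N -> c i = c 0.
Proof.
move=> H; elim=> [//|i IH] hi.
rewrite -(L1 H hi) IH //; lia.
Qed.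

Lemma divexp (n : nat) (z : R) : z != 0 -> n%:R / z * z ^+ n = n%:R * z ^+ n.-1.
Proof.
case: n => [|n] hz; first by rewrite !mul0r.
by rewrite exprS mulrA divfK.
Qed.

Lemma expo (n p q e : nat) (x : R) : 1 + x != 0 -> (n != 0%N -> (p + q = e)%N) ->
  n%:R * ((x / (1 + x)) ^+ p * ((1 + x)^-1) ^+ q) * (1 + x) ^+ e = n%:R * x ^+ p.
Proof.
move=> hc; case: n => [|n]; first by rewrite !mul0r.
move=> /(_ isT) <-.
rewrite expr_div_n exprVn exprD.
have h1 : (1 + x) ^+ p != 0 by rewrite expf_neq0.
have h2 : (1 + x) ^+ q != 0 by rewrite expf_neq0.
move: h1 h2; set A := (1 + x) ^+ p; set B := (1 + x) ^+ q => h1 h2.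
clearbody A B.
by field; rewrite h1 h2.
Qed.

Lemma gT e m (x : R) : (m < e.+2)%N -> x != 0 -> 1 + x != 0 ->
  ((e.+2 - m.+1)%:R / (1 - x / (1 + x)) - m%:R / (x / (1 + x))) *
  ((x / (1 + x)) ^+ m * (1 - x / (1 + x)) ^+ (e.+2 - m.+1)) * (1 + x) ^+ e
  = (e.+2 - m.+1)%:R * x ^+ m - m%:R * x ^+ m.-1.
Proof.
move=> hm hx hc.
have ha : x / (1 + x) != 0 by rewrite mulf_neq0 // invr_eq0.
have hu : 1 - x / (1 + x) = (1 + x)^-1 by field.
have hu0 : (1 + x)^-1 != 0 by rewrite invr_eq0.
rewrite hu mulrBl mulrBl.
congr (_ - _).
- rewrite mulrCA divexp // mulrCA.
  apply: expo => // hn; lia.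
- rewrite mulrA divexp // -(mulrA m%:R).
  apply: expo => // hn; lia.
Qed.

Lemma rearr4 (A B C D E F c d F1 F2 F3 F4 : R) :
  A * B * (C * D * E * F) / (F1 * F2 * F3 * F4) * (c * d) =
  A * (C * D) * c / (F1 * F2) * (B * (E * F) * d / (F3 * F4)).
Proof. rewrite !invfM; ring. Qed.

Lemma trans e (p : 'S_e.+2) (x y : R) : x != 0 -> 1 + x != 0 -> y != 0 -> 1 + y != 0 ->
  gradP p (x / (1 + x)) (y / (1 + y)) * ((1 + x) ^+ e * (1 + y) ^+ e)
  = (e.+2)`!%:R * \sum_(m < e.+2) Gf e.+2 m x * Gf e.+2 (p m) y.
Proof.
move=> hx hcx hy hcy.
rewrite /gradP -mulrA mulr_suml; congr (_ * _); apply: eq_bigr => m _.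
rewrite !subn1 /= /Gf -(@gT e m x) // -(@gT e (p m) y) //.
by rewrite !natrM; apply: rearr4.
Qed.

End Aux.


Section Key.
Variable R : realType.

Lemma sum_ind k (q : 'I_k) (f : 'I_k -> R) : \sum_j (q == j)%:R * f j = f q.
Proof.
rewrite (bigD1 q) //= eqxx mul1r big1 ?addr0 // => j /negbTE.
by rewrite eq_sym => ->; rewrite mul0r.
Qed.

Lemma row_sum k (q : 'I_k) : \sum_j ((q == j)%:R : R) = 1.
Proof.
by rewrite (bigD1 q) //= eqxx big1 ?addr0 // => j; rewrite eq_sym => /negbTE ->.
Qed.

Lemma col_sum k (p : 'S_k) (j : 'I_k) : \sum_m ((p m == j)%:R : R) = 1.
Proof.
rewrite (eq_bigr (fun m => (((p^-1)%g j == m)%:R : R))) ?row_sum // => m _.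
by rewrite -{1}(permKV p j) (inj_eq perm_inj) eq_sym.
Qed.

Lemma adm (x : R) : x != 0 -> 1 + x != 0 -> x / (1 + x) != 0 /\ x / (1 + x) != 1.
Proof.
move=> h0 h1; split; first by rewrite mulf_neq0 // invr_eq0.
apply/eqP => h.
have e : x = x / (1 + x) * (1 + x) by rewrite divfK.
move: e; rewrite h mul1r => e.
have : (1:R) == 0 by rewrite -(addrK x 1) -e subrr.
by rewrite oner_eq0.
Qed.

Lemma neg1 (x : R) : x != -1 -> 1 + x != 0.
Proof. by apply: contra => /eqP h; apply/eqP; rewrite -(addKr 1 x) h addr0. Qed.

Lemma aux1 (a b c d : R) : a - b = c - d -> a = c + (b - d).
Proof. move=> h; rewrite addrCA -h; ring. Qed.

Definition Nm n (t1 t2 t3 : R) (p1 p2 p3 : 'S_n) (m j : 'I_n) : R :=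
  t1 * (p1 m == j)%:R + t2 * (p2 m == j)%:R + t3 * (p3 m == j)%:R.

Lemma key n (t1 t2 t3 : R) (p1 p2 p3 : 'S_n.+2) :
  (forall a b : R, a != 0 -> a != 1 -> b != 0 -> b != 1 ->
     t1 * gradP p1 a b + t2 * gradP p2 a b + t3 * gradP p3 a b = 0) ->
  forall m j, Nm t1 t2 t3 p1 p2 p3 m j * (n.+2)%:R = t1 + t2 + t3.
Proof.
move=> H.
set N := Nm t1 t2 t3 p1 p2 p3.
have sumN : forall m (f : 'I_n.+2 -> R), \sum_j N m j * f j =
    t1 * f (p1 m) + t2 * f (p2 m) + t3 * f (p3 m).
  move=> m f; rewrite /N /Nm.
  under eq_bigr => j _ do rewrite !mulrDl -!(mulrA t1) -!(mulrA t2) -!(mulrA t3).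
  by rewrite !big_split /= -!mulr_sumr !sum_ind.
have S1 : forall x y : R, x != 0 -> x != -1 -> y != 0 -> y != -1 ->
    \sum_m ((\sum_j N m j * Gf n.+2 j y) * Gf n.+2 m x) = 0.
  move=> x y hx hx1 hy hy1.
  have hcx := neg1 hx1; have hcy := neg1 hy1.
  have [ha0 ha1] := adm hx hcx; have [hb0 hb1] := adm hy hcy.
  have := H _ _ ha0 ha1 hb0 hb1.
  move/(congr1 (fun z => z * ((1 + x) ^+ n * (1 + y) ^+ n))).
  rewrite mul0r !mulrDl -(mulrA t1) -(mulrA t2) -(mulrA t3) !trans //.
  have -> : forall A B C K : R, t1*(K*A) + t2*(K*B) + t3*(K*C) = K * (t1*A + t2*B + t3*C).
    by move=> A B C K; ring.
  move=> /eqP; rewrite mulf_eq0 (negbTE (fact_neq0 _ _)) /= => /eqP h; apply: (eq_trans _ h).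
  rewrite (eq_bigr (fun m => (t1 * Gf n.+2 (p1 m) y + t2 * Gf n.+2 (p2 m) y
      + t3 * Gf n.+2 (p3 m) y) * Gf n.+2 m x)); last first.
    by move=> m _; have e := sumN m (fun j => Gf n.+2 j y); simpl in e; rewrite e.
  rewrite !mulr_sumr -!big_split /=; apply: eq_bigr => m _; ring.
have S2 : forall y : R, y != 0 -> y != -1 -> forall m,
    \sum_j (N m j - N (inord 0) j) * Gf n.+2 j y = 0.
  move=> y hy hy1 m.
  pose c := fun i : nat => \sum_j N (inord i) j * Gf n.+2 j y.
  have hc := @Lconst R n.+2 c.
  under eq_bigr => j _ do rewrite mulrBl.
  rewrite sumrB; apply/eqP; rewrite subr_eq0; apply/eqP.
  have := hc _ m (ltn_ord m).
  rewrite /c inord_val; apply.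
  move=> x hx hx1.
  apply: eq_trans (S1 x y hx hx1 hy hy1); apply: eq_bigr => i _.
  by rewrite /c inord_val.
have S3 : forall m j, N m j - N (inord 0) j = N m (inord 0) - N (inord 0) (inord 0).
  move=> m j.
  pose c := fun i : nat => N m (inord i) - N (inord 0) (inord i).
  have := @Lconst R n.+2 c _ j (ltn_ord j).
  rewrite /c inord_val; apply.
  move=> y hy hy1; apply: eq_trans (S2 y hy hy1 m); apply: eq_bigr => i _.
  by rewrite /c inord_val.
have rowS : forall m, \sum_j N m j = t1 + t2 + t3.
  move=> m; have := sumN m (fun _ => 1); rewrite !mulr1 => <-.
  by apply: eq_bigr => j _; rewrite mulr1.
have colS : forall j, \sum_m N m j = t1 + t2 + t3.
  move=> j; rewrite /N /Nm !big_split /= -!mulr_sumr !col_sum; ring.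
have kk : (n.+2%:R : R) != 0 by rewrite pnatr_eq0.
have S4 : forall m, N m (inord 0) = N (inord 0) (inord 0).
  move=> m.
  have : \sum_j (N m j - N (inord 0) j) = 0 by rewrite sumrB !rowS subrr.
  under eq_bigr => j _ do rewrite S3.
  rewrite sumr_const card_ord => /eqP; rewrite mulrn_eq0 /= subr_eq0.
  by move/eqP.
have S5 : forall m j, N m j = N (inord 0) j.
  by move=> m j; apply/eqP; rewrite -subr_eq0 S3 S4 subrr.
move=> m j; rewrite -(colS j) S5.
under eq_bigr => i _ do rewrite S5.
by rewrite sumr_const card_ord mulr_natr.
Qed.

End Key.


Section Cons.
Variable R : realType.

Lemma avoid k (s : seq 'I_k) : (size s < k)%N -> exists j, j \notin s.
Proof.
move=> hs; case: (pickP (fun j => j \notin s)) => [j hj|h]; first by exists j.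
have : (k <= size s)%N.
  rewrite -{1}(card_ord k); apply: leq_trans (card_size s).
  apply: subset_leq_card; apply/subsetP => j _; move: (h j) => /= /negbFE.
  done.
lia.
Qed.

Lemma single n (t : R) (p : 'S_n.+2) :
  (forall a b : R, a != 0 -> a != 1 -> b != 0 -> b != 1 -> t * gradP p a b = 0) ->
  t = 0.
Proof.
move=> H.
have := @key R n t 0 0 p p p _ ord0 (p ord0).
rewrite /Nm eqxx !mul0r !addr0 mulr1 => h.
have {h} : t * n.+2%:R = t.
  apply: h => a b ha0 ha1 hb0 hb1; rewrite !mul0r !addr0; exact: H.
move=> h; have : t * (n.+1)%:R = 0.
  by rewrite -[n.+2]addn1 natrD mulrDr mulr1 in h; rewrite -(addrK t (t * _)) h subrr.
by move/eqP; rewrite mulf_eq0 pnatr_eq0 orbF => /eqP.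
Qed.
Lemma keyz n (t1 t2 t3 : R) (p1 p2 p3 : 'S_n.+2) :
  (forall a b : R, a != 0 -> a != 1 -> b != 0 -> b != 1 ->
     t1 * gradP p1 a b + t2 * gradP p2 a b + t3 * gradP p3 a b = 0) ->
  (exists m j, Nm t1 t2 t3 p1 p2 p3 m j = 0) ->
  forall m j, Nm t1 t2 t3 p1 p2 p3 m j = 0.
Proof.
move=> H [m0 [j0 h0]] m j.
have := key H m j; rewrite -(key H m0 j0) h0 mul0r => /eqP.
by rewrite mulf_eq0 pnatr_eq0 orbF => /eqP.
Qed.

Lemma perm_neq k (p q : 'S_k) : p != q -> exists m, p m != q m.
Proof.
move=> h.
have : ~~ [forall m, p m == q m].
  apply: contra h => /forallP hh; apply/eqP/permP => m; exact/eqP/hh.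
by move/forallPn.
Qed.

Lemma two_same n (t1 t2 : R) (p1 p2 : 'S_n.+3) : p1 != p2 ->
  (forall a b : R, a != 0 -> a != 1 -> b != 0 -> b != 1 ->
     t1 * gradP p1 a b + t2 * gradP p2 a b = 0) -> t1 = 0 /\ t2 = 0.
Proof.
move=> hne H.
have H' : forall a b : R, a != 0 -> a != 1 -> b != 0 -> b != 1 ->
     t1 * gradP p1 a b + t2 * gradP p2 a b + 0 * gradP p1 a b = 0.
  by move=> a b ha0 ha1 hb0 hb1; rewrite mul0r addr0; apply: H.
have Z := keyz H'.
have [m hm] := perm_neq hne.
have [j hj] := @avoid _ [:: p1 ord0; p2 ord0] isT.
move: hj; rewrite !inE negb_or => /andP [hj1 hj2].
rewrite eq_sym in hj1; rewrite eq_sym in hj2.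
have {}Z : forall m j, Nm t1 t2 0 p1 p2 p1 m j = 0.
  apply: Z; exists ord0, j.
  by rewrite /Nm (negbTE hj1) (negbTE hj2) !mulr0 !addr0.
have e1 := Z m (p1 m); have e2 := Z m (p2 m).
move: e1 e2; rewrite /Nm !eqxx (negbTE hm) eq_sym (negbTE hm) !mulr0 !mul0r !mulr1 !addr0 ?add0r.
by move=> -> ->.
Qed.

Lemma three_same n (t1 t2 t3 : R) (p1 p2 p3 : 'S_n.+4) :
  p1 != p2 -> p1 != p3 -> p2 != p3 ->
  (forall a b : R, a != 0 -> a != 1 -> b != 0 -> b != 1 ->
     t1 * gradP p1 a b + t2 * gradP p2 a b + t3 * gradP p3 a b = 0) ->
  [/\ t1 = 0, t2 = 0 & t3 = 0].
Proof.
move=> h12 h13 h23 H.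
have Z := keyz H.
have [j hj] := @avoid _ [:: p1 ord0; p2 ord0; p3 ord0] isT.
move: hj; rewrite !inE !negb_or => /and3P [hj1 hj2 hj3].
rewrite eq_sym in hj1; rewrite eq_sym in hj2; rewrite eq_sym in hj3.
have {}Z : forall m j, Nm t1 t2 t3 p1 p2 p3 m j = 0.
  apply: Z; exists ord0, j.
  by rewrite /Nm (negbTE hj1) (negbTE hj2) (negbTE hj3) !mulr0 !addr0.
have [ma hma] := perm_neq h12.
have [mb hmb] := perm_neq h13.
have [mc hmc] := perm_neq h23.
have A := Z ma (p1 ma); have B := Z mb (p1 mb).
have C := Z mc (p2 mc); have D := Z mc (p3 mc).
move: A B C D; rewrite /Nm !eqxx.
rewrite [p2 ma == _]eq_sym (negbTE hma) [p3 mb == _]eq_sym (negbTE hmb).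
rewrite (negbTE hmc) [p3 mc == _]eq_sym (negbTE hmc).
have : ~~ ((p1 mc == p2 mc) && (p1 mc == p3 mc)).
  apply/negP => /andP [/eqP e1 /eqP e2]; move: hmc; by rewrite -e1 -e2 eqxx.
case: (p1 mc == p2 mc); case: (p1 mc == p3 mc); case: (p3 ma == p1 ma);
  case: (p2 mb == p1 mb) => //= _; rewrite ?mulr1 ?mulr0 ?addr0 ?add0r => A B C D;
  split; lra.
Qed.

Lemma Gf01 n : Gf n.+2 0 (-1 : R) != Gf n.+2 1 (-1).
Proof.
have h0 : 0 < Gf n.+2 0 (-1 : R).
  rewrite /Gf !subSS !subn0 expr0 mul0r subr0 mulr1.
  by apply: divr_gt0; rewrite ltr0n ?muln_gt0 ?fact_gt0.
have h1 : Gf n.+2 1 (-1 : R) < 0.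
  rewrite /Gf !subSS !subn0 /= expr1 expr0 mulr1.
  rewrite ltr_pdivrMr ?mul0r; last by rewrite ltr0n muln_gt0 !fact_gt0.
  have : (0 : R) <= n%:R by rewrite ler0n.
  lra.
apply/eqP => h; move: h0; rewrite h; lra.
Qed.

Lemma mixed n1 n2 (t1 t2 : R) (p1 : 'S_n1.+2) (p2 : 'S_n2.+2) : (n1 < n2)%N ->
  (forall a b : R, a != 0 -> a != 1 -> b != 0 -> b != 1 ->
     t1 * gradP p1 a b + t2 * gradP p2 a b = 0) -> t2 = 0.
Proof.
move=> hn H.
case: (eqVneq t2 0) => // ht2; exfalso.
have [e he] : exists e, n2 = (n1 + e.+1)%N by exists (n2 - n1.+1)%N; lia.
have Y : forall y : R, y != 0 -> y != -1 ->
    \sum_(m < n2.+2) Gf n2.+2 m (-1) * Gf n2.+2 (p2 m) y = 0.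
  move=> y hy hy1; have hcy := neg1 hy1.
  pose c1 := fun i : nat => Gf n1.+2 (p1 (inord i)) y.
  pose c2 := fun i : nat => Gf n2.+2 (p2 (inord i)) y.
  pose q1 := \poly_(i < n1.+1) (wf R n1.+2 i * (c1 i - c1 i.+1)).
  pose q2 := \poly_(i < n2.+1) (wf R n2.+2 i * (c2 i - c2 i.+1)).
  have hq1 : forall x, q1.[x] = \sum_(m < n1.+2) Gf n1.+2 m x * Gf n1.+2 (p1 m) y.
    move=> x; rewrite horner_poly -(rearr n1.+2 c1); apply: eq_bigr => m _.
    by rewrite /c1 inord_val mulrC.
  have hq2 : forall x, q2.[x] = \sum_(m < n2.+2) Gf n2.+2 m x * Gf n2.+2 (p2 m) y.
    move=> x; rewrite horner_poly -(rearr n2.+2 c2); apply: eq_bigr => m _.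
    by rewrite /c2 inord_val mulrC.
  pose P := (t1 * (n1.+2)`!%:R * (1 + y) ^+ e.+1) *: (('X - (-1)%:P) ^+ e.+1 * q1)
            + (t2 * (n2.+2)`!%:R) *: q2.
  have P0 : P = 0.
    apply: L0 => x hx hx1; have hcx := neg1 hx1.
    have [ha0 ha1] := adm hx hcx; have [hb0 hb1] := adm hy hcy.
    have := H _ _ ha0 ha1 hb0 hb1.
    move/(congr1 (fun z => z * ((1 + x) ^+ n2 * (1 + y) ^+ n2))).
    rewrite mul0r mulrDl -(mulrA t2) trans //.
    have -> : (1 + x) ^+ n2 * (1 + y) ^+ n2 = ((1 + x) ^+ n1 * (1 + y) ^+ n1) *
        ((1 + x) ^+ e.+1 * (1 + y) ^+ e.+1) by rewrite he !exprD; ring.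
    rewrite mulrA -(mulrA t1) trans // => h.
    rewrite /P hornerD !hornerZ hornerM horner_exp hornerXsubC hq1 hq2 opprK (addrC x 1).
    apply: eq_trans h; ring.
  have := congr1 (fun p : {poly R} => p.[-1]) P0.
  rewrite /P hornerD !hornerZ hornerM horner_exp hornerXsubC subrr expr0n /=.
  rewrite mul0r mulr0 add0r horner0 hq2 => /eqP.
  by rewrite !mulf_eq0 (negbTE ht2) (negbTE (fact_neq0 _ _)) /= => /eqP.
have Y2 : forall y : R, y != 0 -> y != -1 ->
    \sum_(j < n2.+2) Gf n2.+2 ((p2^-1)%g j) (-1) * Gf n2.+2 j y = 0.
  move=> y hy hy1; apply: eq_trans (Y y hy hy1).
  rewrite (reindex_inj (@perm_inj _ p2)) /=; apply: eq_bigr => m _.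
  by rewrite permK.
pose c := fun i : nat => Gf n2.+2 ((p2^-1)%g (inord i)) (-1 : R).
have hc' : forall i, (i < n2.+2)%N -> c i = c 0.
  apply: Lconst => y hy hy1; apply: eq_trans (Y2 y hy hy1); apply: eq_bigr => m _.
  by rewrite /c inord_val mulrC.
have e0 := hc' (p2 ord0) (ltn_ord _).
have e1 := hc' (p2 (inord 1)) (ltn_ord _).
move: e0 e1; rewrite /c !inord_val !permK inordK // => e0 e1.
by move: (Gf01 n2 : Gf n2.+2 0 (-1 : R) != _); rewrite e0 e1 eqxx.
Qed.

End Cons.

Section Final.
Local Open Scope ring_scope.
Variable R : realType.

Lemma case1 k (p : 'S_k) (t : anyperm -> R) : (1 < k)%N ->
  (forall a b : R, a != 0 -> a != 1 -> b != 0 -> b != 1 ->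
     \sum_(x <- [:: existT (fun j => 'S_j) k p]) t x * gradP (projT2 x) a b = 0) ->
  t (existT (fun j => 'S_j) k p) = 0.
Proof.
case: k p => [|[|n]] p // _ H.
apply: single => a b ha0 ha1 hb0 hb1.
by have := H a b ha0 ha1 hb0 hb1; rewrite big_seq1; apply.
Qed.

Lemma case2 k1 k2 (p1 : 'S_k1) (p2 : 'S_k2) (t : anyperm -> R) :
  (1 < k1)%N -> (1 < k2)%N -> existT (fun j => 'S_j) k1 p1 != existT (fun j => 'S_j) k2 p2 ->
  (forall a b : R, a != 0 -> a != 1 -> b != 0 -> b != 1 ->
     \sum_(x <- [:: existT (fun j => 'S_j) k1 p1; existT (fun j => 'S_j) k2 p2]) t x * gradP (projT2 x) a b = 0) ->
  (t (existT (fun j => 'S_j) k1 p1) = 0 /\ t (existT (fun j => 'S_j) k2 p2) = 0) \/ (k1 = 2%N /\ k2 = 2%N).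
Proof.
case: k1 p1 => [|[|n1]] p1 //; case: k2 p2 => [|[|n2]] p2 // _ _ hne H.
have H' : forall a b : R, a != 0 -> a != 1 -> b != 0 -> b != 1 ->
    t (existT (fun j => 'S_j) n1.+2 p1) * gradP p1 a b + t (existT (fun j => 'S_j) n2.+2 p2) * gradP p2 a b = 0.
  by move=> a b ha0 ha1 hb0 hb1; have := H a b ha0 ha1 hb0 hb1;
     rewrite !big_cons big_nil addr0.
case: (ltngtP n1 n2) => hn.
- have h2 := mixed hn H'.
  left; split => //; apply: (single (p := p1)) => a b ha0 ha1 hb0 hb1.
  by have := H' a b ha0 ha1 hb0 hb1; rewrite h2 mul0r addr0.
- have h1 : t (existT (fun j => 'S_j) n1.+2 p1) = 0.
    apply: (mixed hn) => a b ha0 ha1 hb0 hb1; rewrite addrC; exact: H'.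
  left; split => //; apply: (single (p := p2)) => a b ha0 ha1 hb0 hb1.
  by have := H' a b ha0 ha1 hb0 hb1; rewrite h1 mul0r add0r.
- subst n2; case: n1 p1 p2 hne H H' => [|n] p1 p2 hne H H'; first by right.
  left; apply: two_same H'.
  by apply: contra hne => /eqP ->.
Qed.

Lemma case3 k (p1 p2 p3 : 'S_k) (t : anyperm -> R) : (1 < k)%N ->
  uniq [:: existT (fun j => 'S_j) k p1; existT (fun j => 'S_j) k p2; existT (fun j => 'S_j) k p3] ->
  (forall a b : R, a != 0 -> a != 1 -> b != 0 -> b != 1 ->
     \sum_(x <- [:: existT (fun j => 'S_j) k p1; existT (fun j => 'S_j) k p2; existT (fun j => 'S_j) k p3])
        t x * gradP (projT2 x) a b = 0) ->
  [/\ t (existT (fun j => 'S_j) k p1) = 0, t (existT (fun j => 'S_j) k p2) = 0 & t (existT (fun j => 'S_j) k p3) = 0]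
  \/ k = 3%N.
Proof.
move=> hk hu H.
have hu' : uniq [:: p1; p2; p3].
  move: hu; rewrite /= !inE !negb_or => /andP [/andP [h12 h13] /andP [h23 _]].
  apply/and3P; split => //; first apply/andP; first split.
  - by apply: contra h12 => /eqP ->.
  - by apply: contra h13 => /eqP ->.
  - by apply: contra h23 => /eqP ->.
case: k p1 p2 p3 hk hu hu' H => [|[|[|[|n]]]] p1 p2 p3 // _ hu hu' H.
- exfalso; move/card_uniqP: hu' => hc.
  have := max_card (mem [:: p1; p2; p3]); rewrite hc card_Sn /=.
  done.
- by right.
- left.
  move: hu'; rewrite /= !inE !negb_or => /andP [/andP [h12 h13] /andP [h23 _]].
  apply: three_same h12 h13 h23 _ => a b ha0 ha1 hb0 hb1.
  by have := H a b ha0 ha1 hb0 hb1; rewrite !big_cons big_nil addr0 /= addrA.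
Qed.

End Final.

End Helpers.
Import Helpers.
Unset Implicit Arguments.

Theorem lemma12 (R : realType) (S : seq anyperm) :
  uniq S ->
  (forall x, x \in S -> 1 < tag x)%N ->
  lin_dep R S ->
  [/\ size S <> 1%N,
      (size S = 2%N -> forall x, x \in S -> tag x = 2%N) &
      (size S = 3%N -> (forall x y, x \in S -> y \in S -> tag x = tag y) ->
         forall x, x \in S -> tag x = 3%N)].
Proof.
move=> hu hk [t [[x0 hx0 htx0] H]].
case: S hu hk hx0 H => [|x1 [|x2 [|x3 [|x4 S']]]] hu hk hx0 H //.
- split => // _.
  move: hx0; rewrite inE => /eqP ?; subst x0.
  case: x1 hk H htx0 hu => k p hk H htx0 _.
  by move: htx0; rewrite (case1 (hk _ (mem_head _ _)) H) eqxx.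
- split => // _.
  case: x1 x2 hk H htx0 hu hx0 => k1 p1 [k2 p2] hk H htx0 hu hx0.
  have hk1 := hk _ (mem_head _ _).
  have hk2 : (1 < k2)%N.
    by have := hk (existT (fun j => 'S_j) k2 p2); apply; rewrite !inE eqxx orbT.
  have hne : existT (fun j => 'S_j) k1 p1 != existT (fun j => 'S_j) k2 p2 by move: hu; rewrite /= inE andbT.
  case: (case2 hk1 hk2 hne H) => [[e1 e2] | [e1 e2]].
  + by move: hx0 htx0; rewrite !inE => /orP [] /eqP ->; rewrite ?e1 ?e2 eqxx.
  + by move=> x; rewrite !inE => /orP [] /eqP -> /=; [exact: e1 | exact: e2].
- split => // _ htag.
  case: x1 x2 x3 hk H htx0 hu hx0 htag => k1 p1 [k2 p2] [k3 p3] hk H htx0 hu hx0 htag.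
  have e2 : k2 = k1 by have := htag (existT (fun j => 'S_j) k2 p2) (existT (fun j => 'S_j) k1 p1); apply; rewrite !inE eqxx ?orbT.
  have e3 : k3 = k1 by have := htag (existT (fun j => 'S_j) k3 p3) (existT (fun j => 'S_j) k1 p1); apply; rewrite !inE eqxx ?orbT.
  subst k2 k3.
  have hk1 := hk _ (mem_head _ _).
  case: (case3 hk1 hu H) => [[e1 e2 e3] | e].
  + by move: hx0 htx0; rewrite !inE => /orP [/eqP -> | /orP [] /eqP ->];
       rewrite ?e1 ?e2 ?e3 eqxx.
  + by move=> x; rewrite !inE => /orP [/eqP -> | /orP [] /eqP ->] /=; exact: e.
Qed.
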